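(* In the setting of the context, $\Pi^\rho_0\ne\emptyset$ if and only if $\rho_0=0$. Moreover, in this case either $\Pi^\rho_0=\{\mathbf{0}\}$ or $\Pi^\rho_0$ fails to be compact.
   Context: Let $(\Omega,\mathcal{F},\mathbb{P})$ be a probability space and a market: riskless asset $S^0_0=1$, $S^0_1=1+r$, $r>-1$; risky assets $S^1,\dots,S^d$ with constants $S^i_0>0$ and real-valued $\mathcal{F}$-measurable $S^i_1$; returns $R^i:=(S^i_1-S^i_0)/S^i_0$. Standing assumptions: nonredundancy (if $\theta\in\mathbb{R}^{1+d}$ with $\sum_{i=0}^d\theta^iS^i_t=0$ a.s. for $t\in\{0,1\}$ then $\theta=0$), $R^i\in L^1$, $\mathbb{E}[R^i]\ne r$ for some $i$. Excess return of $\pi\in\mathbb{R}^d$: $X_\pi:=\pi\cdot(R-r\mathbf{1})$; $\Pi_0:=\{\pi:\mathbb{E}[X_\pi]=0\}$. $L$ is a Riesz space with $L^\infty\subset L\subset L^1$ containing all $X_\pi$; $\rho:L\to(-\infty,\infty]$ is monotone, cash-invariant ($\rho(X+c)=\rho(X)-c$) and positively homogeneous ($\rho(\lambda X)=\lambda\rho(X)$, $\lambda\ge0$). $\rho_0:=\inf\{\rho(X_\pi):\pi\in\Pi_0\}$ and $\Pi^\rho_0$ is the set of $\pi\in\Pi_0$ with $\rho(X_\pi)<\infty$ and $\rho(X_\pi)\le\rho(X_{\pi'})$ for all $\pi'\in\Pi_0$. *)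

(* Defs.v *)
From mathcomp Require Import all_boot all_order all_algebra.
From mathcomp Require Import all_classical all_reals all_analysis.
Set Implicit Arguments. Unset Strict Implicit. Unset Printing Implicit Defensive.
Import Order.TTheory GRing.Theory Num.Theory.
Local Open Scope classical_set_scope.
Local Open Scope ring_scope.

Section defs.
Context {d0 : measure_display} {T : measurableType d0} {R : realType}.
Variable P : probability T R.

Definition riesz_L1_space (L : set (T -> R)) : Prop :=
  [/\ (forall X, L X -> measurable_fun setT X /\ P.-integrable setT (EFin \o X)),
      (forall X : T -> R, measurable_fun setT X ->
          (exists M : R, {ae P, forall w, `|X w| <= M}) -> L X),
      (forall X Y, L X -> L Y -> L (X \+ Y)),
      (forall (a : R) X, L X -> L (fun w => a * X w)) &
      (forall X Y, L X -> L Y -> L (fun w => Num.max (X w) (Y w)))].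

Definition risk_measure (L : set (T -> R)) (rho : (T -> R) -> \bar R) : Prop :=
  [/\ (forall X, L X -> rho X != -oo%E),
      (forall X Y, L X -> L Y -> {ae P, forall w, X w <= Y w} ->
          (rho Y <= rho X)%E),
      (forall X (c : R), L X -> rho (fun w => X w + c) = (rho X - c%:E)%E) &
      (forall X (l : R), L X -> 0 <= l -> rho (fun w => l * X w) = (l%:E * rho X)%E)].
End defs.

Section market.
Context {T : Type} {R : realType} {d : nat}.

Definition ret (S0 : 'I_d -> R) (S1 : 'I_d -> T -> R) (i : 'I_d) : T -> R :=
  fun w => (S1 i w - S0 i) / S0 i.

Definition excess (r : R) (S0 : 'I_d -> R) (S1 : 'I_d -> T -> R)
  (pi : 'rV[R]_d) : T -> R :=
  fun w => \sum_(i < d) pi 0 i * (ret S0 S1 i w - r).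
End market.

Section optim.
Context {d0 : measure_display} {T : measurableType d0} {R : realType} {d : nat}.
Variables (P : probability T R) (r : R) (S0 : 'I_d -> R) (S1 : 'I_d -> T -> R)
  (rho : (T -> R) -> \bar R).

Definition Pi0 : set 'rV[R]_d :=
  [set pi | (\int[P]_w (excess r S0 S1 pi w)%:E = 0)%E].

Definition rho0 : \bar R :=
  ereal_inf [set rho (excess r S0 S1 pi) | pi in Pi0].

Definition Pi0rho : set 'rV[R]_d :=
  [set pi | Pi0 pi /\ (rho (excess r S0 S1 pi) < +oo)%E /\
     forall pi', Pi0 pi' ->
       (rho (excess r S0 S1 pi) <= rho (excess r S0 S1 pi'))%E].
End optim.

(* Main.v *)
Require Import Defs.
From mathcomp Require Import all_boot all_order all_algebra.
From mathcomp Require Import all_classical all_reals all_analysis.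
From mathcomp Require Import lra.
Import Order.TTheory GRing.Theory Num.Theory.
Import numFieldNormedType.Exports.
Local Open Scope classical_set_scope.
Local Open Scope ring_scope.

Lemma excessZ (T : Type) (R : realType) (d : nat) (r : R) (S0 : 'I_d -> R)
  (S1 : 'I_d -> T -> R) (l : R) (pi : 'rV[R]_d) :
  excess r S0 S1 (l *: pi) = (fun w => l * excess r S0 S1 pi w).
Proof.
apply/funext => w; rewrite /excess mulr_sumr; apply: eq_bigr => i _.
by rewrite mxE mulrA.
Qed.

Theorem proposition3p6 (d0 : measure_display) (T : measurableType d0)
  (R : realType) (P : probability T R) (d : nat)
  (r : R) (S0 : 'I_d -> R) (S1 : 'I_d -> T -> R)
  (L : set (T -> R)) (rho : (T -> R) -> \bar R) :
  -1 < r ->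
  (forall i, 0 < S0 i) ->
  (forall i, measurable_fun setT (S1 i)) ->
  (* nonredundancy *)
  (forall (th0 : R) (th : 'rV[R]_d),
      th0 + \sum_(i < d) th 0 i * S0 i = 0 ->
      {ae P, forall w, th0 * (1 + r) + \sum_(i < d) th 0 i * S1 i w = 0} ->
      th0 = 0 /\ th = 0) ->
  (forall i, P.-integrable setT (EFin \o ret S0 S1 i)) ->
  (exists i, (\int[P]_w (ret S0 S1 i w)%:E)%E != r%:E) ->
  riesz_L1_space P L ->
  (forall pi, L (excess r S0 S1 pi)) ->
  risk_measure P L rho ->
  ((Pi0rho P r S0 S1 rho !=set0) <-> rho0 P r S0 S1 rho = 0%E) /\
  ((Pi0rho P r S0 S1 rho !=set0) ->
     Pi0rho P r S0 S1 rho = [set 0] \/ ~ compact (Pi0rho P r S0 S1 rho)).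
Proof.
move=> _ _ _ _ _ _ [HL _ _ _ _] HX [rhoNoo _ _ rhoZ].
set X := excess r S0 S1.
have intX pi : P.-integrable setT (EFin \o X pi) by have [] := HL _ (HX pi).
have rhoXZ pi l : 0 <= l -> rho (X (l *: pi)) = (l%:E * rho (X pi))%E.
  by move=> l0; rewrite /X excessZ rhoZ.
have Pi0Z pi l : Pi0 P r S0 S1 pi -> Pi0 P r S0 S1 (l *: pi).
  rewrite /Pi0 /= => H; rewrite excessZ.
  under eq_integral do rewrite EFinM.
  rewrite integralZl//; last exact: intX.
  by transitivity (l%:E * 0)%E; [congr (_ * _)%E; exact: H | exact: mule0].
have Pi00 : Pi0 P r S0 S1 0.
  rewrite /Pi0 /= -(scale0r (0 : 'rV[R]_d)) excessZ.
  under eq_integral do rewrite EFinM.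
  rewrite integralZl//; last exact: intX.
  exact: mul0e.
have rho00 : rho (X 0) = 0%E.
  by rewrite -{1}(scale0r (0 : 'rV[R]_d)) rhoXZ // mul0e.
have lb pi : Pi0 P r S0 S1 pi -> (rho0 P r S0 S1 rho <= rho (X pi))%E.
  by move=> H; apply: ereal_inf_lbound; exists pi.
have part1 : (Pi0rho P r S0 S1 rho !=set0) <-> rho0 P r S0 S1 rho = 0%E.
  split.
  - move=> [pi [H0 [Hfin Hmin]]].
    have Hle : (rho (X pi) <= rho0 P r S0 S1 rho)%E.
      by apply: le_ereal_inf_tmp => _ [pi' H' <-]; exact: Hmin.
    have : rho (X pi) = 0%E.
      have := rhoNoo _ (HX pi); move: Hfin (Hmin _ Pi00) (Hmin _ (Pi0Z _ 2 H0)).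
      rewrite rhoXZ ?ler0n // rho00 -/X.
      case: (rho (X pi)) => [x| |] //= _; rewrite !lee_fin => x0 x2 _.
      congr (_%:E); apply/eqP; rewrite eq_le x0 /=.
      by move: x2; lra.
    move=> E; apply/eqP; rewrite eq_le; apply/andP; split.
      by rewrite -E; exact: lb.
    by rewrite -E.
  - move=> E; exists 0; split => //; split; first by rewrite rho00.
    by move=> pi' H'; rewrite rho00 -E; exact: lb.
split => //.
move=> /[dup] ne /part1 E.
have inZ pi l : Pi0rho P r S0 S1 rho pi -> 0 <= l ->
    Pi0rho P r S0 S1 rho (l *: pi).
  move=> [H0 [Hfin Hmin]] l0; split; first exact: Pi0Z.
  have rz : rho (X pi) = 0%E.
    apply/eqP; rewrite eq_le; apply/andP; split.
      by apply: le_trans (Hmin _ Pi00) _; rewrite rho00.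
    by rewrite -E; exact: lb.
  rewrite rhoXZ // rz mule0; split => // pi' H'.
  by rewrite -E; exact: lb.
have [all0|] := pselect (forall pi, Pi0rho P r S0 S1 rho pi -> pi = 0).
  left; apply/seteqP; split => [pi /all0 -> //|_ ->].
  by case: ne => pi Hpi; rewrite -(scale0r pi); apply: inZ.
move=> /existsNP [pi /not_implyP [Hpi pi0]]; right => cA.
have [M [_ MA]] := compact_bounded cA.
have npi : 0 < `|pi| by rewrite normr_gt0; apply/eqP.
pose l := (`|M| + 2) / `|pi|.
have l0 : 0 <= l by rewrite divr_ge0 // addr_ge0.
have := MA (`|M| + 1) _ _ (inZ _ _ Hpi l0).
rewrite /= normrZ ger0_norm // /l divfK ?gt_eqF //.
have := ler_norm M; lra.
Qed.
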